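(* Let $I=(m_1,\dots,m_k,T_1,\dots,T_n)$ be an instance of the VSPA problem with $0<m_1\le m_2\le\dots\le m_k$, $n=\sum_r m_r$, $T_i\in\{H,L\}$ for all $i$ where $0\le H<L$, and $T_1=L$, and let $g$ be a nondecreasing function. Then for every valid decision sequence $\mathbf{x}=(x_1,\dots,x_n)$ with $x_1>1$ there exists a valid decision sequence $\mathbf{x}^*=(1,x^*_2,\dots,x^*_n)$ with $\mathrm{COST}_I(\mathbf{x}^* )\le\mathrm{COST}_I(\mathbf{x})$.
   Context: Variable-Sized Positional Allocation (VSPA) problem: an instance consists of capacities $m_1,\dots,m_k$ (positive integers) and intrinsic task costs $T_1,\dots,T_n\ge 0$ with $n=\sum_r m_r$, together with a nondecreasing function $g:\mathbb{N}\to\mathbb{R}_{\ge0}$ (in the original problem $g(q)=f(m+1-q)$ for a nonincreasing positional function $f$). A decision sequence $\mathbf{x}\in[k]^n$ assigns task $t$ to agent $x_t$; it is valid if each agent $r$ receives exactly $m_r$ tasks. When task $t$ is assigned, agent $x_t$ has remaining capacity $q_t=m_{x_t}-|\{s<t: x_s=x_t\}|$, and the assignment costs $g(q_t)\cdot T_t$. The total cost is $\mathrm{COST}_I(\mathbf{x})=\sum_{t=1}^n g(q_t)\,T_t$. *)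

(* Defs.v *)
From HB Require Import structures.
From mathcomp Require Import all_boot all_order all_algebra.
Set Implicit Arguments. Unset Strict Implicit. Unset Printing Implicit Defensive.
Import Order.TTheory GRing.Theory Num.Theory.
Local Open Scope ring_scope.

(* Agents are numbered 1..k; capacities are given by m : nat -> nat
   (only m 1, ..., m k are relevant). Tasks are numbered 1..n but stored
   0-based: task t (1-based) has intrinsic cost T (t-1), and a decision
   sequence x : seq nat has x`_(t-1) = x_t. *)

Definition vspa_n (k : nat) (m : nat -> nat) : nat :=
  (\sum_(1 <= r < k.+1) m r)%N.

Definition vspa_valid (k : nat) (m : nat -> nat) (x : seq nat) : Prop :=
  [/\ size x = vspa_n k m,
      all (fun r => (1 <= r <= k)%N) x &
      forall r, (1 <= r <= k)%N -> count_mem r x = m r].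

Definition vspa_q (m : nat -> nat) (x : seq nat) (t : nat) : nat :=
  (m (nth 0%N x t) - count_mem (nth 0%N x t) (take t x))%N.

Definition vspa_cost (R : realFieldType) (m : nat -> nat) (T : nat -> R)
    (g : nat -> R) (x : seq nat) : R :=
  \sum_(t < size x) g (vspa_q m x t) * T t.

(* Main.v *)
Require Import Defs.
From HB Require Import structures.
From mathcomp Require Import all_boot all_order all_algebra.
From mathcomp Require Import ring lra zify.
Import Order.TTheory GRing.Theory Num.Theory.
Local Open Scope ring_scope.
Set Implicit Arguments. Unset Strict Implicit.

Fixpoint Cst (R : realFieldType) (T : nat -> R) (g : nat -> R) (s : seq nat) (o : nat) : R :=
  match s with [::] => 0 | c :: s' => g (count_mem c s) * T o + Cst T g s' o.+1 end.

Lemma C_sum (R : realFieldType) (T g : nat -> R) s o :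
  Cst T g s o = \sum_(t < size s) g (count_mem (nth 0%N s t) (drop t s)) * T (o + t)%N.
Proof.
elim: s o => [|c s IH] o /=; first by rewrite big_ord0.
rewrite big_ord_recl /= addn0 IH; congr (_ + _).
by apply: eq_bigr => i _; rewrite /bump /= addSnnS.
Qed.

Lemma cost_C (R : realFieldType) k m (T g : nat -> R) x :
  vspa_valid k m x -> vspa_cost m T g x = Cst T g x 0.
Proof.
case=> hs ha hc; rewrite C_sum /vspa_cost; apply: eq_bigr => t _.
rewrite add0n /vspa_q; congr (g _ * _).
have hr : (1 <= nth 0%N x t <= k)%N := (all_nthP 0%N ha) t (ltn_ord t).
rewrite -(hc _ hr).
have := count_cat (pred1 (nth 0%N x t)) (take t x) (drop t x).
by rewrite cat_take_drop => ->; rewrite addKn.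
Qed.

Definition sw (a r : nat) : nat := if r == 1%N then a else if r == a then 1%N else r.

Lemma sw_inv a r : a != 1%N -> sw a (sw a r) = r.
Proof.
rewrite /sw => a1; case: (eqVneq r 1%N) => [->|r1].
  by rewrite (negbTE a1) eqxx.
case: (eqVneq r a) => [->|ra]; first by rewrite eqxx.
by rewrite (negbTE r1) (negbTE ra).
Qed.

Lemma count_sw a r s : a != 1%N -> count_mem r (map (sw a) s) = count_mem (sw a r) s.
Proof.
move=> a1; rewrite count_map; apply: eq_count => y /=.
apply/eqP/eqP => [<-|->]; by rewrite sw_inv.
Qed.

Lemma count_sw_bal a r s : count_mem 1%N s = count_mem a s ->
  count_mem (sw a r) s = count_mem r s.
Proof.
rewrite /sw => e; case: (eqVneq r 1%N) => [->|_]; first by rewrite e.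
by case: (eqVneq r a) => [->|].
Qed.

Lemma C_map (R : realFieldType) (T g : nat -> R) a s o : a != 1%N ->
  Cst T g (map (sw a) s) o = Cst T g s o.
Proof.
move=> a1; elim: s o => [|c s IH] o //=.
rewrite IH; congr (g _ * _ + _).
have := count_sw (sw a c) (c :: s) a1; by rewrite sw_inv //= => ->.
Qed.

Lemma C_swap (R : realFieldType) (T g : nat -> R) a s1 s2 o : a != 1%N ->
  count_mem 1%N s2 = count_mem a s2 ->
  Cst T g (s1 ++ map (sw a) s2) o = Cst T g (s1 ++ s2) o.
Proof.
move=> a1 bal; elim: s1 o => [|c s1 IH] o /=; first exact: C_map.
by rewrite IH !count_cat count_sw // count_sw_bal.
Qed.

Lemma claim (R : realFieldType) (T g : nat -> R) (L : R) a w :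
  a != 1%N -> (forall p q, (p <= q)%N -> g p <= g q) ->
  (count_mem 1%N w <= count_mem a w)%N ->
  forall u o, 1%N \notin u -> (forall i, (i <= o + size u)%N -> T i <= L) ->
  Cst T g (u ++ a :: w) o <=
  Cst T g (u ++ 1%N :: w) o +
    L * (g (count_mem a u + count_mem a w).+1 - g (count_mem 1%N w).+1).
Proof.
move=> a1 hg hw; elim=> [|c u IH] o /= hu hT.
  rewrite !eqxx add0n.
  have h1 := hg _ _ (hw : (count_mem 1%N w).+1 <= (count_mem a w).+1)%N.
  have hTo : T o <= L by apply: hT; rewrite addn0.
  set A := g _ in h1 *; set B := g _ in h1 *; set C0 := Cst _ _ _ _.
  have hp : 0 <= (B - A) * (L - T o) by apply: mulr_ge0; lra.
  nra.
move: hu; rewrite in_cons negb_or => /andP [hc hu].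
have IH' := IH o.+1 hu (fun i hi => hT i ltac:(by rewrite addnS -addSn)).
have hTo := hT o (leq_addr _ _).
rewrite !count_cat /=.
have a1' : (1 == a)%N = false by rewrite eq_sym; apply: negbTE.
case: (eqVneq c a) => [eca|nca].
  subst c; rewrite eqxx a1' /= in IH' *.
  rewrite (_ : (1 + (count_mem a u + (1 + count_mem a w)))%N = (count_mem a u + count_mem a w).+2); last by lia.
  rewrite (_ : (1 + (count_mem a u + (0 + count_mem a w)))%N = (count_mem a u + count_mem a w).+1); last by lia.
  rewrite (_ : (1 + count_mem a u + count_mem a w)%N = (count_mem a u + count_mem a w).+1); last by lia.
  have h1 := hg _ _ (leqnSn (count_mem a u + count_mem a w).+1).
  set K := (count_mem a u + count_mem a w).+1 in h1 IH' *.
  move: IH'; set C1 := Cst _ _ _ _; set C2 := Cst _ _ _ _ => IH'.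
  set A := g K.+1 in h1 *; set B := g K in h1 IH' *; set D := g _ in IH' *.
  have hp : 0 <= (A - B) * (L - T o) by apply: mulr_ge0; lra.
  nra.
rewrite (negbTE hc) /= !add0n.
move: IH'; set C1 := Cst _ _ _ _; set C2 := Cst _ _ _ _ => IH'.
lra.
Qed.

Lemma top (R : realFieldType) (T g : nat -> R) (L : R) a u w :
  a != 1%N -> (forall p q, (p <= q)%N -> g p <= g q) ->
  (count_mem 1%N w <= count_mem a w)%N -> 1%N \notin u -> T 0%N = L ->
  (forall i, (i <= (size u).+1)%N -> T i <= L) ->
  Cst T g (1%N :: u ++ a :: w) 0 <= Cst T g (a :: u ++ 1%N :: w) 0.
Proof.
move=> a1 hg hw hu hT0 hT.
have := claim a1 hg hw hu (o := 1%N) hT.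
rewrite /= !count_cat /= !eqxx (count_memPn hu) (negbTE a1) hT0.
have -> : (1 == a)%N = false by rewrite eq_sym; apply: negbTE.
rewrite !add0n (_ : (true + (count_mem a u + count_mem a w))%N = (count_mem a u + count_mem a w).+1) //.
set C1 := Cst _ _ _ _; set C2 := Cst _ _ _ _; set A := g _; set B := g _.
lra.
Qed.

Lemma split_first (r : nat) (s : seq nat) : r \in s ->
  exists u w, s = u ++ r :: w /\ r \notin u.
Proof.
elim: s => [|c s IH] //; rewrite in_cons; case: (eqVneq r c) => [->|rc] /= h.
  by exists [::], s.
have [u [w [-> hu]]] := IH h.
by exists (c :: u), w; rewrite in_cons negb_or rc.
Qed.

Lemma split_cnt (a : nat) (u : seq nat) n : (n < count_mem a u)%N ->
  exists u1 z, u = u1 ++ a :: z /\ count_mem a z = n.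
Proof.
elim: u => [|c u IH] //=; case: (ltnP n (count_mem a u)) => h1 h2.
  by have [u1 [z [-> hz]]] := IH h1; exists (c :: u1), z.
case: (eqVneq c a) h2 => [->|ne] /= h2; last by rewrite add0n ltnNge h1 in h2.
exists [::], u; split => //.
by apply/eqP; rewrite eqn_leq h1 -ltnS -add1n.
Qed.

Lemma valid_swap2 k m a u w : (1 <= a <= k)%N -> (1 <= k)%N ->
  vspa_valid k m (a :: u ++ 1%N :: w) -> vspa_valid k m (1%N :: u ++ a :: w).
Proof.
move=> ha hk [hs hal hc]; split.
- by rewrite -hs /= !size_cat.
- by move: hal; rewrite /= !all_cat /= ha hk => /andP [_ /andP [-> /andP [_ ->]]].
- move=> r hr; rewrite -(hc r hr) /= !count_cat /=.
  set b1 := nat_of_bool _; set b2 := nat_of_bool _; lia.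
Qed.

Lemma sw_range k a r : (1 <= a <= k)%N -> (1 <= k)%N -> (1 <= r <= k)%N -> (1 <= sw a r <= k)%N.
Proof. by rewrite /sw => ha hk hr; case: eqP => // _; case: eqP. Qed.

Lemma valid_sw k m a s1 s2 : a != 1%N -> (1 <= a <= k)%N -> (1 <= k)%N ->
  count_mem 1%N s2 = count_mem a s2 ->
  vspa_valid k m (s1 ++ s2) -> vspa_valid k m (s1 ++ map (sw a) s2).
Proof.
move=> a1 ha hk bal [hs hal hc]; split.
- by rewrite -hs !size_cat size_map.
- move: hal; rewrite !all_cat all_map => /andP [-> h2] /=.
  by apply: sub_all h2 => r /= hr; apply: sw_range.
- move=> r hr; rewrite -(hc r hr) !count_cat count_sw // count_sw_bal //.
Qed.

Lemma sw_a a : a != 1%N -> sw a a = 1%N.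
Proof. by rewrite /sw => a1; rewrite (negbTE a1) eqxx. Qed.
Lemma sw_1 a : sw a 1%N = a.
Proof. by rewrite /sw eqxx. Qed.

Theorem lemma6 (R : realFieldType) (k : nat) (m : nat -> nat)
    (T : nat -> R) (H L : R) (g : nat -> R)
    (hm_pos : (0 < m 1)%N)
    (hm_sorted : forall r s, (1 <= r)%N -> (r <= s)%N -> (s <= k)%N -> (m r <= m s)%N)
    (hH : 0 <= H) (hHL : H < L)
    (hT : forall i, (i < vspa_n k m)%N -> T i = H \/ T i = L)
    (hT1 : T 0%N = L)
    (hg_nonneg : forall q, 0 <= g q)
    (hg_mono : forall p q, (p <= q)%N -> g p <= g q)
    (x : seq nat) (hx : vspa_valid k m x) (hx1 : (1 < nth 0%N x 0)%N) :
  exists xs : seq nat,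
    [/\ vspa_valid k m xs, nth 0%N xs 0 = 1%N &
        vspa_cost m T g xs <= vspa_cost m T g x].
Proof.
case: x hx hx1 => [|a y] hx /= hx1; first by [].
have [hs hal hc] := hx.
have a1 : a != 1%N by rewrite neq_ltn hx1 orbT.
have hak : (1 <= a <= k)%N by move: hal => /= /andP [].
have hk : (1 <= k)%N := leq_trans (ltnW hx1) (proj2 (andP hak)).
have h1r : (1 <= 1 <= k)%N by rewrite leqnn hk.
have hma : (m 1 <= m a)%N := hm_sorted 1%N a (leqnn 1) (ltnW hx1) (proj2 (andP hak)).
have cnt1 := hc 1%N h1r.
have cnta := hc a hak.
have hTL : forall i, (i < size (a :: y))%N -> T i <= L.
  move=> i hi; have := hT i ltac:(by rewrite -hs).
  by case=> ->; [apply: ltW | apply: lexx].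
case: (eqVneq (m 1%N) (m a)) => [e|ne].
  have bal : count_mem 1%N (a :: y) = count_mem a (a :: y) by rewrite cnt1 cnta.
  have hv := valid_sw (s1 := [::]) a1 hak hk bal hx.
  exists ([::] ++ map (sw a) (a :: y)); split => //.
    by rewrite /= sw_a.
  by rewrite (cost_C T g hv) (cost_C T g hx) C_swap.
have hlt : (m 1 < m a)%N by rewrite ltn_neqAle ne hma.
have : 1%N \in a :: y by rewrite -has_pred1 has_count cnt1.
rewrite in_cons eq_sym (negbTE a1) /= => h1y.
have [u [w [ey hu]]] := split_first h1y; subst y.
have c1 : (count_mem 1%N w).+1 = m 1%N.
  by rewrite -cnt1 /= count_cat (count_memPn hu) /= (negbTE a1).
have a1' : (1 == a)%N = false by rewrite eq_sym; apply: negbTE.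
have ca : (count_mem a u + count_mem a w).+1 = m a.
  by rewrite -cnta /= count_cat /= eqxx a1'.
case: (leqP (count_mem 1%N w) (count_mem a w)) => hw.
  have hv := valid_swap2 hak hk hx.
  exists (1%N :: u ++ a :: w); split => //.
  rewrite (cost_C T g hv) (cost_C T g hx); apply: (top (L := L)) => //.
  by move=> i hi; apply: hTL; rewrite /= size_cat /= ltnS addnS; apply: (leq_trans hi); rewrite ltnS leq_addr.
set n := (count_mem 1%N w - count_mem a w)%N.
have hn : (n < count_mem a u)%N by rewrite /n; lia.
have [u1 [z [eu hz]]] := split_cnt hn; subst u.
move: hu; rewrite mem_cat negb_or in_cons negb_or => /andP [hu1 /andP [_ hz1]].
have ex : a :: (u1 ++ a :: z) ++ 1%N :: w = (a :: u1) ++ (a :: z ++ 1%N :: w)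
  by rewrite /= -catA.
have bal : count_mem 1%N (a :: z ++ 1%N :: w) = count_mem a (a :: z ++ 1%N :: w).
  rewrite /= !count_cat /= (count_memPn hz1) eqxx a1' (negbTE a1) hz /n; rewrite /nat_of_bool !add0n subnK //; exact: ltnW.
rewrite ex in hx *.
have hx' := valid_sw a1 hak hk bal hx.
have em : map (sw a) (a :: z ++ 1%N :: w) =
          1%N :: map (sw a) z ++ a :: map (sw a) w.
  by rewrite /= map_cat /= sw_a // sw_1.
rewrite em /= in hx'.
set w2 := map (sw a) z ++ a :: map (sw a) w.
have hw2 : (count_mem 1%N w2 <= count_mem a w2)%N.
  rewrite /w2 !count_cat /= !count_sw // sw_1 sw_a // (count_memPn hz1) hz (negbTE a1) eqxx /nat_of_bool !add0n /n subnK; last exact: ltnW. by rewrite leq_addl.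
have hv := valid_swap2 hak hk hx'.
exists (1%N :: u1 ++ a :: w2); split => //.
rewrite (cost_C T g hv) (cost_C T g hx) -(C_swap T g (a :: u1) 0 a1 bal) em.
apply: (top (L := L)) => //.
move=> i hi; apply: hTL; rewrite /= !size_cat /=. rewrite ltnS; apply: (leq_trans hi); idtac.
by apply: ltn_addr; rewrite addnS ltnS leq_addr.
Qed.
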